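(* Let $f\in\mathbb{R}[x_1,\dots,x_n]$ be a homogeneous polynomial of degree $d$, let $A=A(f)=\bigoplus_{i=0}^d A_i$, let $k$ be an integer with $0\le k\le \lfloor d/2\rfloor$, let $B_k=\{\alpha_1,\dots,\alpha_m\}$ be homogeneous elements of degree $k$ of $Q$ whose images form an $\mathbb{R}$-basis of $A_k$, and let $\bm F=(F_1,\dots,F_m)^{\mathrm T}\in\mathbb{R}[x_1,\dots,x_n]^m$ satisfy $\bm H_{B_k}(f)\,\bm F=\bm 0$. Then: (1) For every $(a_1,\dots,a_n)\in\mathbb{R}^n$, setting $\ell=a_1\partial_1+\dots+a_n\partial_n\in A_1$ and $\xi=\sum_{i=1}^m F_i(a_1,\dots,a_n)\,\alpha_i\in A_k$, the element $\xi$ lies in the kernel of the multiplication map $\times\ell^{d-2k}\colon A_k\to A_{d-k}$. (2) $\sum_{i=1}^m F_i\cdot(\alpha_i f)=0$ as a polynomial in $\mathbb{R}[x_1,\dots,x_n]$.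
   Context: Let $Q=\mathbb{R}[\partial_1,\dots,\partial_n]$ with $\partial_i=\partial/\partial x_i$, acting on $\mathbb{R}[x_1,\dots,x_n]$ by differentiation. For a homogeneous polynomial $f$ of degree $d$, $\operatorname{Ann}_Q(f)=\{\alpha\in Q\mid \alpha f=0\}$ and $A(f)=Q/\operatorname{Ann}_Q(f)$, a graded Artinian Gorenstein algebra with graded pieces $A_i$, $i=0,\dots,d$. For a set $B_k=\{\alpha_1,\dots,\alpha_m\}$ of homogeneous elements of degree $k$ of $Q$ and a polynomial $g$, the $k$-th Hessian matrix $\bm H_{B_k}(g)$ is the $m\times m$ polynomial matrix with $(i,j)$-entry $(\alpha_i\alpha_j)g$. *)

(* Defs.v *)
From HB Require Import structures.
From mathcomp Require Import all_boot all_order all_algebra.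
From mathcomp Require Import mpoly.
From mathcomp Require Import Rstruct.
From Stdlib Require Rdefinitions.
Notation R := Rdefinitions.R.
Set Implicit Arguments. Unset Strict Implicit. Unset Printing Implicit Defensive.
Import GRing.Theory.
Local Open Scope ring_scope.

(* Polynomials R[x_1..x_n] and the ring Q = R[d_1..d_n] are both modelled by
   {mpoly R[n]} (R = Stdlib reals); the action of alpha in Q on g is by
   differentiation: the monomial d^m acts as the partial derivative mderivm m. *)
Definition Rpoly (n : nat) := {mpoly R[n]}.

Definition dact (n : nat) (alpha g : {mpoly R[n]}) : {mpoly R[n]} :=
  \sum_(m <- msupp alpha) alpha@_m *: mderivm m g.

Definition inAnn (n : nat) (f alpha : {mpoly R[n]}) : Prop := dact alpha f = 0.

(* The images of alpha_1..alpha_m in A_k = Q_k / Ann_Q(f)_k form an R-basis: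
   each alpha_i is homogeneous of degree k; they span A_k modulo Ann; and they
   are linearly independent modulo Ann. *)
Definition is_basis_Ak (n : nat) (f : {mpoly R[n]}) (k m : nat)
    (alpha : 'I_m -> {mpoly R[n]}) : Prop :=
  [/\ forall i, alpha i \is k.-homog,
      forall beta : {mpoly R[n]}, beta \is k.-homog ->
        exists c : 'I_m -> R, inAnn f (beta - \sum_i c i *: alpha i)
    & forall c : 'I_m -> R, inAnn f (\sum_i c i *: alpha i) -> forall i, c i = 0].

Definition hessian (n : nat) (m : nat) (alpha : 'I_m -> {mpoly R[n]})
    (g : {mpoly R[n]}) : 'M[{mpoly R[n]}]_m :=
  \matrix_(i, j) dact (alpha i * alpha j) g.

Definition linform (n : nat) (a : 'I_n -> R) : {mpoly R[n]} :=
  \sum_(i < n) a i *: 'X_i.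

(* Main.v *)
Require Import Defs.
From HB Require Import structures.
From mathcomp Require Import all_boot all_order all_algebra.
From mathcomp Require Import mpoly ssrcomplements.
From mathcomp Require Import Rstruct.
From Stdlib Require Import Lia.
From mathcomp Require Import zify.
Set Implicit Arguments. Unset Strict Implicit. Unset Printing Implicit Defensive.
Import GRing.Theory Num.Theory.
Local Open Scope ring_scope.

Section Dact.
Variable n : nat.
Implicit Types (p q g alpha beta : {mpoly R[n]}).

Lemma dactwE K alpha g : (msize alpha <= K)%N ->
  dact alpha g = \sum_(m : 'X_{1..n < K}) alpha@_m *: g^`M[m].
Proof.
move=> le_pi; set I : subFinType _ := 'X_{1..n < K}.
rewrite /dact (big_mksub I) ?msupp_uniq //=; first last.
  by move=> x /msize_mdeg_lt /leq_trans; apply.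
rewrite big_rmcond //= => j /memN_msupp_eq0 ->.
by rewrite scale0r.
Qed.

Lemma dactl_is_linear g : linear (fun alpha => dact alpha g).
Proof.
move=> c p q /=.
pose K := (msize p + msize q)%N.
have hp : (msize p <= K)%N by rewrite leq_addr.
have hq : (msize q <= K)%N by rewrite leq_addl.
have hpq : (msize (c *: p + q) <= K)%N.
  apply: leq_trans (msizeD_le _ _) _; rewrite geq_max hq andbT.
  exact: leq_trans (msizeZ_le _ _) hp.
rewrite !(dactwE g hp, dactwE g hq, dactwE g hpq) scaler_sumr -big_split /=.
apply: eq_bigr => i _; by rewrite mcoeffD mcoeffZ scalerDl scalerA.
Qed.

Definition dactl g := fun alpha => dact alpha g.
HB.instance Definition _ g := GRing.isLinear.Build R {mpoly R[n]} {mpoly R[n]} _ (dactl g)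
  (dactl_is_linear g).

Lemma dactr_is_linear alpha : linear (dact alpha).
Proof.
move=> c p q; rewrite /dact scaler_sumr -big_split /=; apply: eq_bigr => i _.
by rewrite linearP /= scalerDr !scalerA mulrC.
Qed.
HB.instance Definition _ alpha := GRing.isLinear.Build R {mpoly R[n]} {mpoly R[n]} _ (dact alpha)
  (dactr_is_linear alpha).

Lemma dactX m g : dact 'X_[m] g = g^`M[m].
Proof. by rewrite /dact msuppX big_seq1 mcoeffX eqxx scale1r. Qed.

Lemma dact_suml (I : Type) (r : seq I) (P : pred I) (Fa : I -> {mpoly R[n]}) g :
  dact (\sum_(i <- r | P i) Fa i) g = \sum_(i <- r | P i) dact (Fa i) g.
Proof. exact: (raddf_sum (dactl g)). Qed.

Lemma dactZl c alpha g : dact (c *: alpha) g = c *: dact alpha g.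
Proof. exact: (linearZZ (dactl g) c alpha). Qed.

Lemma dactDl alpha beta g : dact (alpha + beta) g = dact alpha g + dact beta g.
Proof. exact: (raddfD (dactl g)). Qed.

Lemma dactBl alpha beta g : dact (alpha - beta) g = dact alpha g - dact beta g.
Proof. exact: (raddfB (dactl g)). Qed.

Lemma dact_sumr (I : Type) (r : seq I) (P : pred I) (Fa : I -> {mpoly R[n]}) g :
  dact g (\sum_(i <- r | P i) Fa i) = \sum_(i <- r | P i) dact g (Fa i).
Proof. exact: raddf_sum. Qed.

Lemma dactZr c alpha g : dact alpha (c *: g) = c *: dact alpha g.
Proof. exact: (linearZZ (dact alpha) c g). Qed.

Lemma dactM alpha beta g : dact (alpha * beta) g = dact alpha (dact beta g).
Proof.
rewrite [alpha]mpolyE [beta]mpolyE mulr_suml dact_suml.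
rewrite [in RHS]dact_suml; apply: eq_bigr => m1 _.
rewrite mulr_sumr dact_suml dactZl dactX dact_suml linear_sum /= scaler_sumr.
apply: eq_bigr => m2 _.
rewrite -scalerAl -scalerAr !dactZl -mpolyXD !dactX linearZ /= scalerA.
by rewrite linearZ /= scalerA mulrC addmC mderivmDm.
Qed.

Lemma dact1 g : dact 1 g = g.
Proof. by rewrite -(mpolyX0 _ _) dactX mderivm0m. Qed.


Lemma mderivm_homog m p b : p \is b.-homog -> p^`M[m] \is (b - mdeg m).-homog.
Proof.
move=> hp; apply/dhomogP => m' hm'.
rewrite mcoeff_msupp mcoeff_mderivm in hm'.
have : p@_(m + m') != 0 by apply: contraNneq hm' => ->; rewrite mul0rn.
rewrite -mcoeff_msupp => /(dhomog_mf hp); rewrite /= mdegD => <-.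
by rewrite addKn.
Qed.

Lemma dact_homog alpha p ea b : alpha \is ea.-homog -> p \is b.-homog ->
  dact alpha p \is (b - ea).-homog.
Proof.
move=> ha hp; rewrite /dact big_seq; apply: rpred_sum => m hm.
apply: rpredZ; have := dhomog_mf ha hm => /= <-.
exact: mderivm_homog.
Qed.

Lemma homog0_const p : p \is 0%N.-homog -> p = (p@_0%MM)%:MP.
Proof.
move=> hp; apply/mpolyP => m; rewrite mcoeffC.
have [->|nm] := eqVneq m 0%MM; first by rewrite mulr1.
rewrite mulr0; apply: (dhomog_nemf_coeff hp) => /=.
by rewrite mdeg_eq0.
Qed.

Lemma euler_X m : \sum_(i < n) 'X_i * ('X_[m] : {mpoly R[n]})^`M(i) = (mdeg m)%:R *: 'X_[m].
Proof.
rewrite mdegE natr_sum scaler_suml; apply: eq_bigr => i _.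
rewrite mderivX -scalerAr -mpolyXD.
have [->|hi] := eqVneq (m i) 0%N; first by rewrite !scale0r.
congr (_ *: 'X_[_]); rewrite addmC submK //; apply/mnm_lepP => j.
rewrite mnm1E; case: eqP => [<-|]; last by [].
by rewrite lt0n.
Qed.

Lemma euler p e : p \is e.-homog -> \sum_(i < n) 'X_i * p^`M(i) = e%:R *: p.
Proof.
move=> hp; rewrite {1}[p]mpolyE.
have -> : \sum_(i < n) 'X_i * (\sum_(m <- msupp p) p@_m *: 'X_[m])^`M(i) =
   \sum_(m <- msupp p) p@_m *: \sum_(i < n) 'X_i * ('X_[m] : {mpoly R[n]})^`M(i).
  under eq_bigr do rewrite raddf_sum mulr_sumr.
  rewrite exchange_big /=; apply: eq_bigr => m _.
  rewrite scaler_sumr; apply: eq_bigr => i _.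
  by rewrite mderivZ -scalerAr.
rewrite [in RHS](mpolyE p) scaler_sumr big_seq [in RHS]big_seq; apply: eq_bigr => m hm.
by rewrite euler_X (dhomog_mf hp hm) !scalerA mulrC.
Qed.

Fixpoint Eop (k : nat) (g : {mpoly R[n]}) : {mpoly R[n]} :=
  match k with 0%N => g | k'.+1 => \sum_(i < n) 'X_i * Eop k' (g^`M(i)) end.

Lemma Eop_homog k e g : g \is e.-homog -> Eop k g = (e ^_ k)%:R *: g.
Proof.
elim: k e g => [|k ih] e g hg /=; first by rewrite ffactn0 scale1r.
have hd i : g^`M(i) \is e.-1.-homog.
  by rewrite -mderivmU1m; have := mderivm_homog U_(i) hg; rewrite mdeg1 subn1.
rewrite (eq_bigr (fun i => (e.-1 ^_ k)%:R *: ('X_i * g^`M(i)))); last first.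
  by move=> i _; rewrite (ih _ _ (hd i)) scalerAr.
by rewrite -scaler_sumr (euler hg) scalerA -natrM mulnC -ffactnS.
Qed.


Lemma Eop_van M (Fv h : 'I_M -> {mpoly R[n]}) k : forall mu0,
  (forall mu, mdeg mu = k -> \sum_j Fv j * (h j)^`M[mu0 + mu] = 0) ->
  \sum_j Fv j * Eop k ((h j)^`M[mu0]) = 0.
Proof.
elim: k => [|k ih] mu0 H /=.
  by have := H 0%MM mdeg0; rewrite addm0.
under eq_bigr do rewrite mulr_sumr.
rewrite exchange_big big1 // => i _.
under eq_bigr do rewrite mulrCA.
rewrite -mulr_sumr.
under eq_bigr do rewrite -mderivmU1m -mderivmDm.
rewrite ih ?mulr0 // => mu hmu; rewrite -addmA; apply: H.
by rewrite mdegD mdeg1 hmu.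
Qed.

Lemma linform_homog (a : 'I_n -> R) : linform a \is 1%N.-homog.
Proof.
rewrite /linform; apply: rpred_sum => i _; apply: rpredZ.
by rewrite dhomogX /= mdeg1.
Qed.

Lemma dact_linform (a : 'I_n -> R) q : dact (linform a) q = \sum_i a i *: q^`M(i).
Proof.
rewrite /linform dact_suml; apply: eq_bigr => i _.
by rewrite dactZl dactX mderivmU1m.
Qed.

Lemma dact_lpow (a : 'I_n -> R) e q : q \is e.-homog ->
  (dact (linform a ^+ e) q)@_0%MM = (e`!)%:R * q.@[a].
Proof.
elim: e q => [|e ih] q hq.
  by rewrite expr0 dact1 fact0 mul1r {2}(homog0_const hq) mevalC.
rewrite exprSr dactM.
have hl : dact (linform a) q \is e.-homog.
  by have := dact_homog (linform_homog a) hq; rewrite subn1.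
rewrite (ih _ hl) dact_linform raddf_sum /=.
have := congr1 (meval a) (euler hq); rewrite mevalZ raddf_sum /=.
under eq_bigr do rewrite mevalM mevalXU.
move=> E; under eq_bigr do rewrite mevalZ.
by rewrite E factS natrM mulrA [(e`!)%:R * _]mulrC.
Qed.
End Dact.

Theorem mainTheorem1 (n d k m : nat) (f : {mpoly R[n]})
    (alpha : 'I_m -> {mpoly R[n]}) (F : 'cV[{mpoly R[n]}]_m) :
  f \is d.-homog ->
  (k <= d./2)%N ->
  is_basis_Ak f k alpha ->
  hessian alpha f *m F = 0 ->
  (forall a : 'I_n -> R,
     let l := linform a in
     let xi := \sum_(i < m) (F i 0).@[a] *: alpha i in
     inAnn f (xi * l ^+ (d - 2 * k)))
  /\ \sum_(i < m) F i 0 * dact (alpha i) f = 0.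
Proof.
move=> hf hk [hA hspan hind] hH.
have hk2 : (k.*2 <= d)%N by rewrite -geq_half_double.
pose h j := dact (alpha j) f.
have hh j : h j \is (d - k).-homog := dact_homog (hA j) hf.
have hH' i : \sum_j dact (alpha i * alpha j) f * F j 0 = 0.
  by have := congr1 (fun M : 'M[{mpoly R[n]}]_(m, 1) => M i 0) hH; rewrite !mxE /=; under eq_bigr do rewrite mxE.
have stepA mu : mdeg mu = k -> \sum_j F j 0 * (h j)^`M[mu] = 0.
  move=> hmu; have hb : ('X_[mu] : {mpoly R[n]}) \is k.-homog by apply/dhomogP => m'; rewrite msuppX inE => /eqP ->.
  have [c hc] := hspan _ hb.
  move: hc; rewrite /inAnn dactBl dact_suml => /eqP; rewrite subr_eq0 => /eqP hc.
  have e1 j : (h j)^`M[mu] = \sum_i c i *: dact (alpha i * alpha j) f.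
    rewrite /h -dactX -dactM mulrC dactM hc dact_sumr; apply: eq_bigr => i _.
    by rewrite dactZl dactZr -dactM mulrC.
  under eq_bigr do rewrite e1 mulr_sumr.
  rewrite exchange_big big1 // => i _.
  under eq_bigr do rewrite -scalerAr [F _ 0 * _]mulrC.
  by rewrite -scaler_sumr hH' scaler0.
split; last first.
  have hv : forall mu, mdeg mu = k -> \sum_j F j 0 * (h j)^`M[0%MM + mu] = 0.
    by move=> mu hmu; rewrite add0m; exact: stepA.
  have := @Eop_van n m (fun j => F j 0) h k 0%MM hv.
  under eq_bigr do rewrite mderivm0m (Eop_homog k (hh _)) -scalerAr.
  rewrite -scaler_sumr => /eqP; rewrite scaler_eq0 pnatr_eq0 => /orP [|/eqP //].
  move=> /eqP h0; have : (0 < (d - k) ^_ k)%N by rewrite ffact_gt0; lia.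
  by rewrite h0.
move=> a l xi; rewrite /inAnn mulrC dactM.
set g := dact xi f; set e' := (d - 2 * k)%N.
have hxi : xi \is k.-homog.
  by apply: rpred_sum => i _; apply: rpredZ; exact: hA.
have hg : g \is (d - k).-homog := dact_homog hxi hf.
have hle : l ^+ e' \is e'.-homog.
  by have := dhomogMn e' (linform_homog a); rewrite mul1n.
apply/mpolyP => mu; rewrite mcoeff0.
have [hmu|hmu] := eqVneq (mdeg mu) k; last first.
  apply: (dhomog_nemf_coeff (dact_homog hle hg)) => /=.
  by rewrite (_ : (d - k - e')%N = k) // /e'; lia.
have hq : g^`M[mu] \is e'.-homog.
  by have := mderivm_homog mu hg; rewrite hmu (_ : (d - k - k)%N = e') // /e'; lia.
have hq0 : (g^`M[mu]).@[a] = 0.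
  rewrite /g /xi dact_suml linear_sum raddf_sum /=.
  have E := congr1 (meval a) (stepA mu hmu); rewrite raddf_sum meval0 /= in E; rewrite -[X in _ = X]E.
  by apply: eq_bigr => j _; rewrite dactZl linearZ /= mevalZ mevalM.
have key := dact_lpow a hq; rewrite hq0 mulr0 in key.
have : (dact (l ^+ e') g)^`M[mu]@_0%MM = 0.
  by rewrite -dactX -dactM mulrC dactM dactX.
rewrite mcoeff_mderivm addm0 => /eqP; rewrite mulrn_eq0 => /orP [|/eqP //].
move=> /eqP h0; have : (0 < \prod_(i < n) mu i ^_ mu i)%N by apply: prodn_gt0 => i; rewrite ffact_gt0.
by rewrite h0.
Qed.
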